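(* Let $T=(V,E)$ be a finite tree with $V=\{1,\dots,n\}$, rooted at a vertex $v_0$ and equipped with a fixed left-to-right ordering of children, and let $e_i=(p_i,q_i)$, $i=1,\dots,k$, be its edges, where $p_i$ is the parent of $q_i$, enumerated level by level starting from the root and proceeding from left to right at every depth (breadth-first order). Let $N$ be a symmetric positive definite $n\times n$ real matrix and $M=N_T$. For $j=2,\dots,k$ let $A_j=\bigcup_{i=1}^{j-1}\{p_i,q_i\}\setminus\{p_j\}$, $$\sigma_j=M_{p_j,p_j}-M_{p_j,A_j}M_{A_j,A_j}^{-1}M_{A_j,p_j},\qquad \eta_j=M_{p_j,p_j}-M_{p_j,q_j}^2M_{q_j,q_j}^{-1}.$$ Then $M$ is positive definite if and only if $\sigma_j+\eta_j-M_{p_j,p_j}>0$ for every $j=2,\dots,k$.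
   Context: For a symmetric $n\times n$ real matrix $N=(n_{ij})$, $N_T$ is defined by $(N_T)_{ij}=n_{ij}$ if $i=j$ or $(i,j)\in E$, and $0$ otherwise. For index sets $X,Y$, $M_{XY}$ denotes the submatrix of $M$ with rows in $X$ and columns in $Y$; for a single vertex $x$, $M_{x,Y}$ denotes the corresponding row vector and $M_{x,x}$ the diagonal entry. *)

(* Defs.v *)
From HB Require Import structures.
From mathcomp Require Import all_boot all_order all_algebra.
Set Implicit Arguments. Unset Strict Implicit. Unset Printing Implicit Defensive.
Import Order.TTheory GRing.Theory Num.Theory.

(* ---------- graphs on the vertex set 'I_n (= {1,...,n}, 0-indexed) ---------- *)

Definition simple_graph (n : nat) (E : rel 'I_n) : Prop :=
  symmetric E /\ irreflexive E.

Definition connected_graph (n : nat) (E : rel 'I_n) : Prop :=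
  forall u v, connect E u v.

Definition acyclic_graph (n : nat) (E : rel 'I_n) : Prop :=
  forall c : seq 'I_n, uniq c -> cycle E c -> (size c <= 2)%N.

Definition is_tree (n : nat) (E : rel 'I_n) : Prop :=
  [/\ simple_graph E, connected_graph E & acyclic_graph E].

Fixpoint walkn (n : nat) (E : rel 'I_n) (m : nat) (u v : 'I_n) : bool :=
  match m with
  | 0 => u == v
  | m'.+1 => [exists w, E u w && walkn E m' w v]
  end.

Definition gdist (n : nat) (E : rel 'I_n) (u v : 'I_n) : nat :=
  find (fun m => walkn E m u v) (iota 0 n).

Definition depth (n : nat) (E : rel 'I_n) (v0 v : 'I_n) : nat := gdist E v0 v.

(* the edge list es = [:: (p_1,q_1); ...; (p_k,q_k)] (0-indexed here) *)
Definition par (n : nat) (v0 : 'I_n) (es : seq ('I_n * 'I_n)) (i : nat) : 'I_n :=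
  (nth (v0, v0) es i).1.
Definition chl (n : nat) (v0 : 'I_n) (es : seq ('I_n * 'I_n)) (i : nat) : 'I_n :=
  (nth (v0, v0) es i).2.

Definition vpos (n : nat) (v0 : 'I_n) (es : seq ('I_n * 'I_n)) (v : 'I_n) : nat :=
  index v (v0 :: map snd es).

(* es is the list of the edges of the tree E rooted at v0, each oriented
   (parent, child), in breadth-first order: level by level, and at each level
   from left to right, the left-to-right order of a level being induced by the
   left-to-right order of the parents and a (fixed, arbitrary) order of the
   children of each vertex. *)
Definition bfs_edge_enum (n : nat) (E : rel 'I_n) (v0 : 'I_n)
    (es : seq ('I_n * 'I_n)) : Prop :=
  [/\ uniq es,
      (forall e, e \in es -> E e.1 e.2 && (depth E v0 e.1 < depth E v0 e.2)%N),
      (forall u v, E u v -> ((u, v) \in es) || ((v, u) \in es)),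
      (forall i j, (i < j < size es)%N ->
         (depth E v0 (chl v0 es i) <= depth E v0 (chl v0 es j))%N)
    & (forall i j, (i < j < size es)%N ->
         depth E v0 (chl v0 es i) = depth E v0 (chl v0 es j) ->
         (vpos v0 es (par v0 es i) <= vpos v0 es (par v0 es j))%N)].

Local Open Scope ring_scope.

Definition posdef (R : numDomainType) (n : nat) (A : 'M[R]_n) : Prop :=
  A^T = A /\ forall x : 'cV[R]_n, x != 0 -> 0 < (x^T *m A *m x) 0 0.

Definition tree_part (R : numDomainType) (n : nat) (E : rel 'I_n) (N : 'M[R]_n)
  : 'M[R]_n :=
  \matrix_(i, j) (if (i == j) || E i j then N i j else 0).

Definition subsq (R : numDomainType) (n : nat) (A : {set 'I_n}) (M : 'M[R]_n)
  : 'M[R]_#|A| :=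
  \matrix_(a, b) M (enum_val a) (enum_val b).
Definition subrow (R : numDomainType) (n : nat) (x : 'I_n) (A : {set 'I_n})
  (M : 'M[R]_n) : 'rV[R]_#|A| :=
  \row_b M x (enum_val b).

Definition Aset (n : nat) (v0 : 'I_n) (es : seq ('I_n * 'I_n)) (j : nat)
  : {set 'I_n} :=
  (\bigcup_(i < j) [set par v0 es i; chl v0 es i]) :\ par v0 es j.

Definition sigma_j (R : realFieldType) (n : nat) (v0 : 'I_n)
  (es : seq ('I_n * 'I_n)) (M : 'M[R]_n) (j : nat) : R :=
  let p := par v0 es j in
  let A := Aset v0 es j in
  M p p - (subrow p A M *m invmx (subsq A M) *m (subrow p A M)^T) 0 0.

Definition eta_j (R : realFieldType) (n : nat) (v0 : 'I_n)
  (es : seq ('I_n * 'I_n)) (M : 'M[R]_n) (j : nat) : R :=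
  let p := par v0 es j in
  let q := chl v0 es j in
  M p p - M p q ^+ 2 / M q q.

(* Main.v *)
Require Import Defs.
From HB Require Import structures.
From mathcomp Require Import all_boot all_order all_algebra.
From mathcomp Require Import zify ring lra.
Set Implicit Arguments. Unset Strict Implicit. Unset Printing Implicit Defensive.
Import Order.TTheory GRing.Theory Num.Theory.

Lemma walkn_snoc n (E : rel 'I_n) m u w v :
  walkn E m u w -> E w v -> walkn E m.+1 u v.
Proof.
elim: m u => [|m IH] u /=.
  by move=> /eqP-> Ewv; apply/existsP; exists v; rewrite Ewv eqxx.
case/existsP=> x /andP[Eux Hx] Ewv; apply/existsP; exists x.
by rewrite Eux; exact: (IH _ Hx Ewv).
Qed.

Lemma walkn_last n (E : rel 'I_n) m u v :
  walkn E m.+1 u v -> exists2 w, walkn E m u w & E w v.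
Proof.
elim: m u => [|m IH] u /=.
  by case/existsP=> x /andP[Eux /eqP<-]; exists u.
case/existsP=> x /andP[Eux Hx]; have [w Hw Ewv] := IH _ Hx.
by exists w => //; apply/existsP; exists x; rewrite Eux.
Qed.

Lemma walkn_path n (E : rel 'I_n) x p :
  path E x p -> walkn E (size p) x (last x p).
Proof.
elim: p x => [|y p IH] x /=; first by [].
case/andP=> Exy Hp; apply/existsP; exists y; rewrite Exy; exact: IH.
Qed.

Lemma depth_walk n (E : rel 'I_n) v0 v :
  connected_graph E -> walkn E (depth E v0 v) v0 v /\ (depth E v0 v < n)%N.
Proof.
move=> Hc; have /connectP[p Hp ->] := Hc v0 v.
case: (shortenP Hp) => p' Hp' Up' _.
have Hs : (size p' < n)%N.
  move/card_uniqP: Up' => /= <-.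
  by apply: leq_trans (max_card _) _; rewrite card_ord.
have Hw := walkn_path Hp'.
have Hh : has (fun m => walkn E m v0 (last v0 p')) (iota 0 n).
  apply/hasP; exists (size p') => //; by rewrite mem_iota.
rewrite /depth /gdist; split; last by rewrite -[X in (_ < X)%N](size_iota 0 n) -has_find.
have := nth_find 0 Hh; rewrite nth_iota //.
by rewrite -[X in (_ < X)%N](size_iota 0 n) -has_find.
Qed.

Lemma depth_le n (E : rel 'I_n) v0 v m :
  connected_graph E -> walkn E m v0 v -> (depth E v0 v <= m)%N.
Proof.
move=> Hc Hw; have [_ Hd] := depth_walk v0 v Hc.
case: (ltnP m n) => Hm; last exact: (leq_trans (ltnW Hd)).
rewrite leqNgt; apply/negP => Hlt.
have := before_find 0 Hlt; rewrite nth_iota // add0n Hw //.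
Qed.

Lemma depth0 n (E : rel 'I_n) v0 v :
  connected_graph E -> depth E v0 v = 0%N -> v = v0.
Proof. by move=> Hc H; have [] := depth_walk v0 v Hc; rewrite H /= => /eqP. Qed.

Lemma depth_v0 n (E : rel 'I_n) v0 :
  connected_graph E -> depth E v0 v0 = 0%N.
Proof. by move=> Hc; apply/eqP; rewrite -leqn0; apply: depth_le => //=. Qed.

Lemma depth_adj n (E : rel 'I_n) v0 u v :
  connected_graph E -> E u v -> (depth E v0 v <= (depth E v0 u).+1)%N.
Proof.
move=> Hc Euv; apply: depth_le => //; apply: walkn_snoc Euv.
by have [] := depth_walk v0 u Hc.
Qed.

Lemma depth_pred n (E : rel 'I_n) v0 v :
  connected_graph E -> (0 < depth E v0 v)%N ->
  exists2 u, E u v & (depth E v0 u).+1 = depth E v0 v.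
Proof.
move=> Hc; have [] := depth_walk v0 v Hc.
case Hd: (depth E v0 v) => [|d] // Hw _ _.
have [w Hw' Ewv] := walkn_last Hw; exists w => //.
have h1 := depth_le Hc Hw'; have h2 := depth_adj v0 Hc Ewv; rewrite Hd in h2; lia.
Qed.


Lemma tree_paths n (E : rel 'I_n) v0 d :
  is_tree E -> forall a b, depth E v0 a = d -> depth E v0 b = d -> a != b ->
  exists s, [/\ path E a (rcons s b), uniq (a :: rcons s b)
              & all (fun x => depth E v0 x < d)%N s].
Proof.
case=> [[Hsym Hirr] Hc Hac]; elim: d => [|d IH] a b Ha Hb Hab.
  by rewrite (depth0 Hc Ha) (depth0 Hc Hb) eqxx in Hab.
have [pa Epa Hpa] := depth_pred Hc (ltac:(by rewrite Ha) : (0 < depth E v0 a)%N).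
have [pb Epb Hpb] := depth_pred Hc (ltac:(by rewrite Hb) : (0 < depth E v0 b)%N).
move: Hpa Hpb; rewrite Ha Hb => [[Hpa]] [Hpb].
have Hna : forall x, (depth E v0 x <= d)%N -> x != a.
  by move=> x Hx; apply/eqP=> E1; move: Hx; rewrite E1 Ha; lia.
have Hnb : forall x, (depth E v0 x <= d)%N -> x != b.
  by move=> x Hx; apply/eqP=> E1; move: Hx; rewrite E1 Hb; lia.
case: (eqVneq pa pb) => [Eq|Hne].
  exists [:: pa]; split => /=.
  - by rewrite (Hsym a pa) Epa Eq Epb.
  - by rewrite !inE negb_or Hab eq_sym Hna ?Hpa //= Hnb ?Hpa.
  - by rewrite Hpa ltnSn.
have [s [Hp Hu Hs]] := IH pa pb Hpa Hpb Hne.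
exists (pa :: rcons s pb); split.
- rewrite rcons_cons /= (Hsym a pa) Epa /= rcons_path Hp /=.
  by rewrite (last_rcons pa s pb).
  have Hall : all (fun x => depth E v0 x <= d)%N (pa :: rcons s pb).
    rewrite /= Hpa leqnn /= all_rcons Hpb leqnn /=.
    by apply/allP => x /(allP Hs) /= /ltnW.
  have Hnot : forall y, (d < depth E v0 y)%N -> y \notin pa :: rcons s pb.
    move=> y Hy; apply/negP => /(allP Hall) /=; lia.
  change (uniq (a :: rcons (pa :: rcons s pb) b)).
  rewrite cons_uniq rcons_uniq Hu andbT mem_rcons inE negb_or Hab.
  by rewrite !Hnot ?Ha ?Hb.
- rewrite /= Hpa ltnSn /= all_rcons Hpb ltnSn /=.
  by apply/allP => x /(allP Hs) /= /ltnW; lia.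
Qed.

Lemma tree_up n (E : rel 'I_n) v0 u w v :
  is_tree E -> E u v -> E w v -> (depth E v0 u).+1 = depth E v0 v ->
  (depth E v0 w).+1 = depth E v0 v -> u = w.
Proof.
move=> Ht Euv Ewv Hu Hw; case: (eqVneq u w) => // Hne; exfalso.
have Hdw : depth E v0 w = depth E v0 u by lia.
have [s [Hp Huq Hs]] := tree_paths Ht erefl Hdw Hne.
case: Ht => [[Hsym Hirr] Hc Hac].
have := Hac (v :: u :: rcons s w).
rewrite /= size_rcons ltnNge.
suff -> : v \notin u :: rcons s w by move=> /(_ Huq); rewrite /= (Hsym v u) Euv rcons_path Hp /= last_rcons Ewv => /(_ isT).
apply/negP; rewrite inE mem_rcons inE => /or3P[/eqP E1|/eqP E1|Hv].
- by move: Hu; rewrite E1; lia.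
- by move: Hw; rewrite E1; lia.
- by move: (allP Hs v Hv) => /=; rewrite -Hu; lia.
Qed.


Lemma edge_i n (E : rel 'I_n) v0 es i :
  bfs_edge_enum E v0 es -> (i < size es)%N ->
  E (par v0 es i) (chl v0 es i) /\ (depth E v0 (par v0 es i) < depth E v0 (chl v0 es i))%N.
Proof.
case=> _ H _ _ _ Hi; have /H/andP[] := mem_nth (v0, v0) Hi; by [].
Qed.

Lemma edge_dep n (E : rel 'I_n) v0 es i :
  is_tree E -> bfs_edge_enum E v0 es -> (i < size es)%N ->
  (depth E v0 (par v0 es i)).+1 = depth E v0 (chl v0 es i).
Proof.
move=> [_ Hc _] Hb Hi; have [H1 H2] := edge_i Hb Hi.
have := depth_adj v0 Hc H1; lia.
Qed.

Lemma mono_le n (E : rel 'I_n) v0 es i j :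
  bfs_edge_enum E v0 es -> (i <= j)%N -> (j < size es)%N ->
  (depth E v0 (chl v0 es i) <= depth E v0 (chl v0 es j))%N.
Proof.
case=> _ _ _ H _; rewrite leq_eqVlt => /orP[/eqP->//|Hij] Hj.
by apply: H; rewrite Hij.
Qed.

Lemma mono_lt n (E : rel 'I_n) v0 es i j :
  bfs_edge_enum E v0 es -> (i < size es)%N -> (j < size es)%N ->
  (depth E v0 (chl v0 es i) < depth E v0 (chl v0 es j))%N -> (i < j)%N.
Proof.
move=> Hb Hi Hj Hd; rewrite ltnNge; apply/negP => Hji.
by have := mono_le Hb Hji Hi; lia.
Qed.

Lemma edge_in n (E : rel 'I_n) v0 es u v :
  is_tree E -> bfs_edge_enum E v0 es -> E u v ->
  (depth E v0 u < depth E v0 v)%N ->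
  exists2 i, (i < size es)%N & par v0 es i = u /\ chl v0 es i = v.
Proof.
move=> Ht Hb Euv Hd; case: (Hb) => _ H2 H3 _ _.
have Hin : (u, v) \in es.
  case/orP: (H3 _ _ Euv) => // /H2 /andP[_ /=]; lia.
exists (index (u, v) es); first by rewrite index_mem.
by rewrite /par /chl nth_index.
Qed.

Lemma is_child n (E : rel 'I_n) v0 es v :
  is_tree E -> bfs_edge_enum E v0 es -> v != v0 ->
  exists2 i, (i < size es)%N & chl v0 es i = v.
Proof.
move=> Ht Hb Hv; have Hc : connected_graph E by case: Ht.
have Hd : (0 < depth E v0 v)%N.
  by rewrite lt0n; apply: contra Hv => /eqP /(depth0 Hc) ->.
have [u Euv Hu] := depth_pred Hc Hd.
have [|i Hi [_ Hq]] := edge_in Ht Hb Euv; first by rewrite -Hu.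
by exists i.
Qed.

Lemma par0 n (E : rel 'I_n) v0 es :
  is_tree E -> bfs_edge_enum E v0 es -> (0 < size es)%N -> par v0 es 0 = v0.
Proof.
move=> Ht Hb Hk; apply/eqP; apply/negPn/negP => Hne.
have [i Hi Hq] := is_child Ht Hb Hne.
move: (edge_dep Ht Hb Hk) (mono_le Hb (leq0n i) Hi); rewrite Hq; lia.
Qed.

Definition Dset n (v0 : 'I_n) es j : {set 'I_n} :=
  v0 |: \bigcup_(i < j) [set par v0 es i; chl v0 es i].

Lemma memD n (v0 : 'I_n) es j x :
  x \in Dset v0 es j -> x = v0 \/ exists2 i, (i < j)%N & (x = par v0 es i \/ x = chl v0 es i).
Proof.
case/setU1P => [->|/bigcupP[i _]]; first by left.
by rewrite !inE => /orP[/eqP->|/eqP->]; right; exists i => //; [left|right].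
Qed.

Lemma inU n (v0 : 'I_n) es j i x :
  (i < j)%N -> x = par v0 es i \/ x = chl v0 es i ->
  x \in \bigcup_(i < j) [set par v0 es i; chl v0 es i].
Proof.
move=> Hi Hx; apply/bigcupP; exists (Ordinal Hi) => //=.
by rewrite !inE; case: Hx => ->; rewrite eqxx ?orbT.
Qed.

Lemma inD n (v0 : 'I_n) es j i x :
  (i < j)%N -> x = par v0 es i \/ x = chl v0 es i -> x \in Dset v0 es j.
Proof. by move=> Hi Hx; rewrite /Dset inE (inU Hi Hx) orbT. Qed.

Lemma D_par n (E : rel 'I_n) v0 es j :
  is_tree E -> bfs_edge_enum E v0 es -> (j < size es)%N -> par v0 es j \in Dset v0 es j.
Proof.
move=> Ht Hb Hj; case: (eqVneq (par v0 es j) v0) => [->|Hne]; first by rewrite !inE eqxx.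
have [i Hi Hq] := is_child Ht Hb Hne.
apply: (inD (i := i)); last by right.
apply: (mono_lt Hb Hi Hj); rewrite Hq; have [] := edge_i Hb Hj; by [].
Qed.

Lemma D_chl n (E : rel 'I_n) v0 es j :
  is_tree E -> bfs_edge_enum E v0 es -> (j < size es)%N -> chl v0 es j \notin Dset v0 es j.
Proof.
move=> Ht Hb Hj; have Hc : connected_graph E by case: Ht.
have [Ej Hdj] := edge_i Hb Hj.
apply/negP => /memD [Hv|[i Hij [Hp|Hq]]].
- by move: Hdj; rewrite Hv depth_v0.
- have Hi : (i < size es)%N by apply: ltn_trans Hj.
  have [_ Hdi] := edge_i Hb Hi; have := mono_le Hb (ltnW Hij) Hj.
  by move: Hdi; rewrite -Hp; lia.
- have Hi : (i < size es)%N by apply: ltn_trans Hj.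
  have [Ei _] := edge_i Hb Hi.
  have Hpp : par v0 es i = par v0 es j.
    apply: (tree_up (v0 := v0) (v := chl v0 es j) Ht) => //.
    + by rewrite Hq.
    + by rewrite Hq (edge_dep Ht Hb Hi).
    + exact: edge_dep.
  case: Hb => Hu _ _ _ _.
  have : nth (v0, v0) es i = nth (v0, v0) es j.
    move: Hpp Hq; rewrite /par /chl.
    by case: (nth _ es i) => ??; case: (nth _ es j) => ?? /= -> ->.
  by move/eqP; rewrite nth_uniq // => /eqP Eij; move: Hij; rewrite Eij ltnn.
Qed.

Lemma D_nb n (E : rel 'I_n) v0 es j x :
  is_tree E -> bfs_edge_enum E v0 es -> (j < size es)%N ->
  x \in Dset v0 es j -> x != par v0 es j -> ~~ E (chl v0 es j) x.
Proof.
move=> Ht Hb Hj Hx Hne; apply/negP => Eqx.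
have Hc : connected_graph E by case: Ht.
have [Hsym _] : simple_graph E by case: Ht.
have [Ej Hdj] := edge_i Hb Hj.
case: (Hb) => _ H2 H3 _ _.
case/orP: (H3 _ _ Eqx) => /H2 /andP[_ /= Hd].
-
  case: (memD Hx) => [Hv|[i Hij [Hp|Hq]]].
  + by move: Hd; rewrite Hv depth_v0.
  + have Hi : (i < size es)%N by apply: ltn_trans Hj.
    have [_ Hdi] := edge_i Hb Hi; have := mono_le Hb (ltnW Hij) Hj.
    by move: Hd Hdi; rewrite -Hp; lia.
  + have Hi : (i < size es)%N by apply: ltn_trans Hj.
    have := mono_le Hb (ltnW Hij) Hj.
    by move: Hd; rewrite -Hq; lia.
- have Hx' : x = par v0 es j.
    apply: (tree_up (v0 := v0) (v := chl v0 es j) Ht) => //.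
    + by rewrite Hsym.
    + by have := depth_adj v0 Hc (ltac:(by rewrite Hsym) : E x (chl v0 es j)); lia.
    + exact: edge_dep.
  by rewrite Hx' eqxx in Hne.
Qed.

Lemma D_all n (E : rel 'I_n) v0 es :
  is_tree E -> bfs_edge_enum E v0 es -> Dset v0 es (size es) = setT.
Proof.
move=> Ht Hb; apply/setP => x; rewrite in_setT.
case: (eqVneq x v0) => [->|Hne]; first by rewrite /Dset setU11.
have [i Hi Hq] := is_child Ht Hb Hne.
by apply: (inD Hi); right.
Qed.

Lemma D_succ n (v0 : 'I_n) es j :
  Dset v0 es j.+1 = chl v0 es j |: (par v0 es j |: Dset v0 es j).
Proof.
apply/setP => x; rewrite /Dset big_ord_recr /= !inE.
by case: (x == v0); case: (x \in _); case: (x == par v0 es j); case: (x == chl v0 es j).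
Qed.

Lemma Aset_eq n (E : rel 'I_n) v0 es j :
  is_tree E -> bfs_edge_enum E v0 es -> (0 < j < size es)%N ->
  Aset v0 es j = Dset v0 es j :\ par v0 es j.
Proof.
move=> Ht Hb /andP[H0 Hj]; rewrite /Aset /Dset.
have Hv : v0 \in \bigcup_(i < j) [set par v0 es i; chl v0 es i].
  apply: (inU (i := 0)) => //; left; rewrite (par0 Ht Hb) //; exact: leq_ltn_trans (leq0n _) (ltn_trans H0 Hj).
by rewrite (setUidPr _) // sub1set.
Qed.
Local Open Scope ring_scope.

Definition qf (R : realFieldType) n (M : 'M[R]_n) (x : 'cV[R]_n) : R := (x^T *m M *m x) 0 0.

Definition PDon (R : realFieldType) n (M : 'M[R]_n) (S : {set 'I_n}) : Prop :=
  forall x : 'cV[R]_n, (forall i, i \notin S -> x i 0 = 0) -> x != 0 -> 0 < qf M x.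

Definition rvec (R : realFieldType) n (A : {set 'I_n}) (x : 'cV[R]_n) : 'rV[R]_#|A| :=
  \row_k x (enum_val k) 0.

Lemma qfE (R : realFieldType) n (M : 'M[R]_n) x :
  qf M x = \sum_i \sum_j x i 0 * M i j * x j 0.
Proof.
rewrite /qf mxE exchange_big; apply: eq_bigr => j _; rewrite mxE mulr_suml.
by apply: eq_bigr => i _; rewrite mxE.
Qed.

Lemma qf_supp (R : realFieldType) n (M : 'M[R]_n) (x : 'cV[R]_n) (C : {set 'I_n}) :
  (forall i, i \notin C -> x i 0 = 0) ->
  qf M x = \sum_(i in C) \sum_(j in C) x i 0 * M i j * x j 0.
Proof.
move=> Hx; rewrite qfE (bigID (fun i => i \in C)) /= [X in _ + X]big1 ?addr0.
  apply: eq_bigr => i _; rewrite (bigID (fun j => j \in C)) /= [X in _ + X]big1 ?addr0 //.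
  by move=> j /Hx ->; rewrite mulr0.
by move=> i /Hx ->; apply: big1 => j _; rewrite !mul0r.
Qed.

Lemma qf_expand (R : realFieldType) n (M : 'M[R]_n) (A : {set 'I_n}) p q (x : 'cV[R]_n) :
  M^T = M -> p \notin A -> q \notin A -> p != q -> (forall i, i \in A -> M q i = 0) ->
  (forall i, i \notin q |: (p |: A) -> x i 0 = 0) ->
  qf M x = x q 0 ^+ 2 * M q q + 2 * x q 0 * x p 0 * M p q + x p 0 ^+ 2 * M p p
    + 2 * x p 0 * (subrow p A M *m (rvec A x)^T) 0 0
    + (rvec A x *m subsq A M *m (rvec A x)^T) 0 0.
Proof.
move=> Hs HpA HqA Hpq HqM Hx.
have Msym : forall i j, M j i = M i j by move=> i j; rewrite -[in LHS]Hs mxE.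
have HqpA : q \notin p |: A by rewrite !inE negb_or eq_sym Hpq.
set f := fun i j => x i 0 * M i j * x j 0.
have Hsplit : forall F : 'I_n -> R, \sum_(i in q |: (p |: A)) F i = F q + (F p + \sum_(i in A) F i).
  by move=> F; rewrite big_setU1 //= big_setU1.
have -> : qf M x = \sum_(i in q |: (p |: A)) \sum_(j in q |: (p |: A)) f i j by rewrite (qf_supp _ Hx).
under eq_bigr => i _ do rewrite (Hsplit (f i)).
rewrite (Hsplit (fun i => f i q + (f i p + \sum_(j in A) f i j))) big_split /= big_split /=.
have h1 : \sum_(i in A) f q i = 0 by apply: big1 => i /HqM; rewrite /f => ->; rewrite mulr0 mul0r.
have h2 : \sum_(i in A) f i q = 0 by apply: big1 => i /HqM; rewrite /f Msym => ->; rewrite mulr0 mul0r.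
have h3 : \sum_(i in A) f i p = \sum_(i in A) f p i.
  by apply: eq_bigr => i _; rewrite /f Msym; ring.
rewrite h1 h2 h3.
have h4 : (subrow p A M *m (rvec A x)^T) 0 0 = \sum_(i in A) M p i * x i 0.
  by rewrite big_enum_val mxE; apply: eq_bigr => k _; rewrite !mxE.
have h5 : (rvec A x *m subsq A M *m (rvec A x)^T) 0 0 = \sum_(i in A) \sum_(j in A) f i j.
  rewrite big_enum_val mxE; apply: eq_bigr => k _; rewrite big_enum_val mxE mulr_suml.
  by apply: eq_bigr => l _; rewrite !mxE /f Msym; ring.
have h6 : \sum_(i in A) f p i = x p 0 * \sum_(i in A) M p i * x i 0.
  by rewrite mulr_sumr; apply: eq_bigr => i _; rewrite /f mulrA.
rewrite h4 h5 h6 /f (Msym p q); ring.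
Qed.
Lemma tr11 (R : realFieldType) (A : 'M[R]_1) : A^T 0 0 = A 0 0.
Proof. by rewrite mxE. Qed.

Lemma entryD (R : realFieldType) (A B : 'M[R]_1) : (A + B) 0 0 = A 0 0 + B 0 0.
Proof. by rewrite mxE. Qed.
Lemma entryZ (R : realFieldType) a (A : 'M[R]_1) : (a *: A) 0 0 = a * A 0 0.
Proof. by rewrite mxE. Qed.

Lemma complete_sq (R : realFieldType) m (S : 'M[R]_m) (r y : 'rV[R]_m) (b c : R) :
  S^T = S -> S \in unitmx ->
  b ^+ 2 * c + 2 * b * (r *m y^T) 0 0 + (y *m S *m y^T) 0 0 =
  b ^+ 2 * (c - (r *m invmx S *m r^T) 0 0)
  + ((y + b *: (r *m invmx S)) *m S *m (y + b *: (r *m invmx S))^T) 0 0.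
Proof.
move=> Hs Hu; set w := r *m invmx S.
have wS : w *m S = r by rewrite /w mulmxKV.
have SwT : S *m w^T = r^T by rewrite /w trmx_mul trmx_inv Hs mulmxA mulmxV // mul1mx.
have e1 : (y *m r^T) 0 0 = (r *m y^T) 0 0 by rewrite -tr11 trmx_mul trmxK.
rewrite linearD /= linearZ /= !mulmxDl !mulmxDr ?mulmxDl.
rewrite -?scalemxAl -?scalemxAr -?scalemxAl.
rewrite wS -[y *m S *m w^T]mulmxA SwT.
have e2 : (r *m w^T) 0 0 = (w *m r^T) 0 0 by rewrite -tr11 trmx_mul trmxK.
rewrite !entryD !entryZ e1 e2; ring.
Qed.

Definition ext (R : realFieldType) n (A : {set 'I_n}) (y : 'rV[R]_#|A|) (i : 'I_n) : R :=
  if [pick k | enum_val k == i] is Some k then y 0 k else 0.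

Definition mkvec (R : realFieldType) n (A : {set 'I_n}) p q (a b : R) (y : 'rV[R]_#|A|)
  : 'cV[R]_n := \col_i (if i == q then a else if i == p then b else ext y i).

Lemma ext_val (R : realFieldType) n (A : {set 'I_n}) (y : 'rV[R]_#|A|) k :
  ext y (enum_val k) = y 0 k.
Proof.
rewrite /ext; case: pickP => [k' /eqP/enum_val_inj -> //|H].
by have := H k; rewrite eqxx.
Qed.

Lemma ext_out (R : realFieldType) n (A : {set 'I_n}) (y : 'rV[R]_#|A|) i :
  i \notin A -> ext y i = 0.
Proof.
rewrite /ext; case: pickP => [k /eqP <-|//].
by rewrite enum_valP.
Qed.

Lemma mkvec_q (R : realFieldType) n (A : {set 'I_n}) p q a b (y : 'rV[R]_#|A|) :
  mkvec p q a b y q 0 = a.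
Proof. by rewrite mxE eqxx. Qed.

Lemma mkvec_p (R : realFieldType) n (A : {set 'I_n}) p q a b (y : 'rV[R]_#|A|) :
  p != q -> mkvec p q a b y p 0 = b.
Proof. by move=> H; rewrite mxE (negbTE H) eqxx. Qed.

Lemma mkvec_r (R : realFieldType) n (A : {set 'I_n}) p q a b (y : 'rV[R]_#|A|) :
  p \notin A -> q \notin A -> rvec A (mkvec p q a b y) = y.
Proof.
move=> HpA HqA; apply/rowP => k; rewrite !mxE.
have Hk := enum_valP k.
have -> : (enum_val k == q) = false by apply/negbTE; apply: contraNneq HqA => <-.
have -> : (enum_val k == p) = false by apply/negbTE; apply: contraNneq HpA => <-.
exact: ext_val.
Qed.

Lemma mkvec_supp (R : realFieldType) n (A : {set 'I_n}) p q a b (y : 'rV[R]_#|A|) i :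
  i \notin q |: (p |: A) -> mkvec p q a b y i 0 = 0.
Proof.
rewrite !inE !negb_or => /and3P[H1 H2 H3].
by rewrite mxE (negbTE H1) (negbTE H2) ext_out.
Qed.

Lemma vec_eq0 (R : realFieldType) n (A : {set 'I_n}) p q (x : 'cV[R]_n) :
  (forall i, i \notin q |: (p |: A) -> x i 0 = 0) ->
  x q 0 = 0 -> x p 0 = 0 -> rvec A x = 0 -> x = 0.
Proof.
move=> Hs Hq Hp Hr; apply/matrixP => i j; rewrite (ord1 j) mxE.
case: (boolP (i \in q |: (p |: A))) => [|/Hs //].
rewrite !inE => /or3P[/eqP->//|/eqP->//|Hi].
have := congr1 (fun v : 'rV_#|A| => v 0 (enum_rank_in Hi i)) Hr.
by rewrite !mxE enum_rankK_in.
Qed.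

Lemma step (R : realFieldType) n (M : 'M[R]_n) (A : {set 'I_n}) p q :
  M^T = M -> p \notin A -> q \notin A -> p != q -> (forall i, i \in A -> M q i = 0) ->
  0 < M q q -> PDon M (p |: A) ->
  (PDon M (q |: (p |: A)) <->
   0 < M p p - (subrow p A M *m invmx (subsq A M) *m (subrow p A M)^T) 0 0 - M p q ^+ 2 / M q q).
Proof.
move=> Hs HpA HqA Hpq HqM Hqq HB.
set S := subsq A M; set r := subrow p A M.
have Msym : forall i j, M j i = M i j by move=> i j; rewrite -[in LHS]Hs mxE.
have ST : S^T = S by apply/matrixP => a b; rewrite !mxE Msym.
have HE := fun (x : 'cV[R]_n) Hx => @qf_expand _ _ M A p q x Hs HpA HqA Hpq HqM Hx.
have Spos : forall y : 'rV[R]_#|A|, y != 0 -> 0 < (y *m S *m y^T) 0 0.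
  move=> y Hy; set x := mkvec p q 0 0 y.
  have := HE x (@mkvec_supp _ _ _ _ _ _ _ y).
  rewrite mkvec_q mkvec_p // mkvec_r // => E1.
  have -> : (y *m S *m y^T) 0 0 = qf M x by rewrite E1; ring.
  apply: HB.
    move=> i Hi; case: (eqVneq i q) => [->|Hiq]; first exact: mkvec_q.
    by apply: mkvec_supp; rewrite !inE negb_or Hiq /=; rewrite !inE in Hi.
  by apply: contraNneq Hy => Hx0; rewrite -(mkvec_r 0 0 y HpA HqA) -/x Hx0; apply/eqP/rowP => k; rewrite !mxE.
have Snn : forall y : 'rV[R]_#|A|, 0 <= (y *m S *m y^T) 0 0.
  move=> y; case: (eqVneq y 0) => [->|/Spos/ltW //].
  by rewrite !mul0mx mxE.
have Su : S \in unitmx.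
  rewrite unitmxE unitfE; apply/negP => /det0P [v Hv HvS].
  by have := Spos v Hv; rewrite HvS mul0mx mxE ltxx.
split.
- move=> HC.
  set w := r *m invmx S.
  set x := mkvec p q (- M p q / M q q) 1 (- w).
  have Hx0 : x != 0.
    apply/negP => /eqP Hx; have := mkvec_p (q := q) (- M p q / M q q) 1 (- w) Hpq.
    by rewrite -/x Hx mxE => /eqP; rewrite eq_sym oner_eq0.
  have := HC x (@mkvec_supp _ _ _ _ _ _ _ _) Hx0.
  rewrite (HE x (@mkvec_supp _ _ _ _ _ _ _ _)) mkvec_q mkvec_p // mkvec_r //.
  have := complete_sq r (- w) 1 (M p p) ST Su.
  rewrite -/w scale1r addNr !mul0mx => E2.
  have z0 : (0 : 'M[R]_1) 0 0 = 0 by rewrite mxE.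
  rewrite z0 in E2; rewrite -/S.
  have key : (- M p q / M q q) ^+ 2 * M q q + 2 * (- M p q / M q q) * 1 * M p q
     = - (M p q ^+ 2 / M q q).
    by field; rewrite gt_eqF.
  move: E2 key; lra.
- move=> Hcond x Hx Hx0.
  rewrite (HE x Hx) -/S.
  set a := x q 0; set b := x p 0; set y := rvec A x.
  have E2 := complete_sq r y b (M p p) ST Su.
  have HZ := Snn (y + b *: (r *m invmx S)).
  move: E2 HZ Hcond.
  set Z := ((y + b *: (r *m invmx S)) *m S *m (y + b *: (r *m invmx S))^T) 0 0.
  set X := (r *m invmx S *m r^T) 0 0.
  set Y := (y *m S *m y^T) 0 0.
  set W := (r *m y^T) 0 0.
  move=> E2 HZ Hcond.
  have Hq2 : 0 <= M q q * (a + b * M p q / M q q) ^+ 2 by apply: mulr_ge0; [exact: ltW | exact: sqr_ge0].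
  have key : a ^+ 2 * M q q + 2 * a * b * M p q + b ^+ 2 * (M p p - X)
     = M q q * (a + b * M p q / M q q) ^+ 2 + b ^+ 2 * (M p p - X - M p q ^+ 2 / M q q).
    by field; rewrite gt_eqF.
  case: (eqVneq b 0) => Hb.
  + have HY : 0 <= Y by apply: Snn.
    case: (eqVneq a 0) => Ha.
    * have Hy : y != 0.
        apply: contraNneq Hx0 => Hy; apply/eqP; exact: (vec_eq0 Hx Ha Hb Hy).
      have := Spos y Hy; rewrite -/Y Hb Ha; lra.
    * have Ha2 : 0 < a ^+ 2 * M q q by rewrite mulr_gt0 // lt0r sqrf_eq0 Ha sqr_ge0.
      rewrite Hb; lra.
  + have Hb2 : 0 < b ^+ 2 * (M p p - X - M p q ^+ 2 / M q q).
      by rewrite mulr_gt0 // lt0r sqrf_eq0 Hb sqr_ge0.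
    move: key E2; lra.
Qed.

Lemma PDon_mono (R : realFieldType) n (M : 'M[R]_n) (S T : {set 'I_n}) :
  S \subset T -> PDon M T -> PDon M S.
Proof.
move=> HST HT x Hx Hx0; apply: HT Hx0 => i Hi; apply: Hx.
by apply: contra Hi; apply: (subsetP HST).
Qed.

Lemma PDon_agree (R : realFieldType) n (M N : 'M[R]_n) (S : {set 'I_n}) :
  posdef N -> (forall i j, i \in S -> j \in S -> M i j = N i j) -> PDon M S.
Proof.
move=> [_ HN] Hag x Hx Hx0; have := HN x Hx0; rewrite -/(qf N x).
rewrite (qf_supp N Hx) (qf_supp M Hx).
congr (_ < _); apply: eq_bigr => i Hi; apply: eq_bigr => j Hj; by rewrite Hag.
Qed.

Lemma posdef_PDon (R : realFieldType) n (M : 'M[R]_n) :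
  posdef M <-> M^T = M /\ PDon M setT.
Proof.
split=> [[Hs H]|[Hs H]]; split => // x; last by apply: H => i; rewrite in_setT.
by move=> _; apply: H.
Qed.

Lemma diag_pos (R : realFieldType) n (N : 'M[R]_n) q : posdef N -> 0 < N q q.
Proof.
move=> [_ HN]; set x : 'cV[R]_n := \col_i (i == q)%:R.
have Hx0 : x != 0.
  by apply/negP => /eqP /matrixP /(_ q 0); rewrite !mxE eqxx => /eqP; rewrite oner_eq0.
have := HN x Hx0; rewrite -/(qf N x) (@qf_supp _ _ N x [set q]).
  by rewrite !big_set1 !mxE eqxx mul1r mulr1.
by move=> i; rewrite !inE mxE => /negbTE ->.
Qed.

Unset Implicit Arguments.

Theorem corollary6 (R : realFieldType) (n : nat) (E : rel 'I_n) (v0 : 'I_n)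
    (es : seq ('I_n * 'I_n)) (N : 'M[R]_n) :
  is_tree E -> bfs_edge_enum E v0 es -> posdef N ->
  let M := tree_part E N in
  posdef M <->
  (forall j : nat, (1 <= j < size es)%N ->
     0 < sigma_j v0 es M j + eta_j v0 es M j - M (par v0 es j) (par v0 es j)).
Proof.
move=> Ht Hb HN M.
have Hsym : symmetric E by case: Ht => [[]].
have Mij : forall i j, M i j = if (i == j) || E i j then N i j else 0.
  by move=> i j; rewrite /M /tree_part mxE.
have NT : N^T = N by case: HN.
have MT : M^T = M.
  apply/matrixP => i j; rewrite mxE !Mij eq_sym Hsym.
  by case: ifP => // _; rewrite -[in RHS]NT mxE.
have Mqq : forall q, 0 < M q q by move=> q; rewrite Mij eqxx /=; exact: diag_pos.
have Hstep : forall j, (0 < j < size es)%N -> PDon M (Dset v0 es j) ->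
   (PDon M (Dset v0 es j.+1) <->
    0 < sigma_j v0 es M j + eta_j v0 es M j - M (par v0 es j) (par v0 es j)).
  move=> j Hj HD; have /andP[Hj0 Hjk] := Hj.
  set p := par v0 es j; set q := chl v0 es j.
  have Hp : p \in Dset v0 es j := D_par Ht Hb Hjk.
  have Hq : q \notin Dset v0 es j := D_chl Ht Hb Hjk.
  have HA := Aset_eq Ht Hb Hj.
  have HB : p |: Aset v0 es j = Dset v0 es j by rewrite HA setD1K.
  have HC : Dset v0 es j.+1 = q |: (p |: Aset v0 es j).
    by rewrite D_succ HB; congr (_ |: _); apply/setUidPr; rewrite sub1set.
  rewrite HC.
  have Hpq : p != q by apply: contraNneq Hq => <-.
  have := @step R n M (Aset v0 es j) p q MT _ _ Hpq _ (Mqq q) (ltac:(by rewrite HB)).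
  rewrite /sigma_j /eta_j /= -/p -/q => ->.
  - by split => H; lra.
  - by rewrite HA setD11.
  - by rewrite HA inE negb_and (negbTE Hq) orbT.
  - move=> i; rewrite HA in_setD1 => /andP[Hip HiD].
    have Hqi : (q == i) = false by apply/negbTE; apply: contraNneq Hq => ->.
    by rewrite Mij Hqi (negbTE (D_nb Ht Hb Hjk HiD Hip)).
split.
- move=> /posdef_PDon [_ HT] j Hj.
  have HD : PDon M (Dset v0 es j) := PDon_mono (subsetT _) HT.
  apply/(Hstep j Hj HD); exact: PDon_mono (subsetT _) HT.
- move=> Hc; apply/posdef_PDon; split => //.
  rewrite -(D_all Ht Hb).
  suff : forall j, (j <= size es)%N -> PDon M (Dset v0 es j) by apply.
  elim => [_ | j IH Hj].
    apply: (PDon_agree HN) => x y; rewrite /Dset big_ord0 setU0 !inE => /eqP-> /eqP->.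
    by rewrite Mij eqxx.
  case: (posnP j) => [Ej0 | Hj0]; last first.
    apply/(Hstep j _ (IH (ltnW Hj))); first by rewrite Hj0.
    by apply: Hc; rewrite Hj0.
  rewrite Ej0 in Hj *.
  have Hp0 := par0 Ht Hb Hj.
  have [E0 _] := edge_i Hb Hj; rewrite Hp0 in E0.
  have Hxs : forall x, x \in Dset v0 es 1 -> x = v0 \/ x = chl v0 es 0.
    move=> x /memD [->|[i Hi Hx]]; first by left.
    move: Hi Hx; rewrite ltnS leqn0 => /eqP ->; rewrite Hp0; case; by [left|right].
  apply: (PDon_agree HN) => x y /Hxs Hx /Hxs Hy.
  rewrite Mij; case: ifP => // /negbT; rewrite negb_or => /andP[Hxy HE].
  exfalso; move: Hxy HE.
  by case: Hx => ->; case: Hy => ->; rewrite ?eqxx // ?E0 // Hsym E0.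
Qed.
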